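(* Let $n\ge 2$ be an integer. Then $$\binom{n^3-\lfloor\frac{(n-1)^3+1}{2}\rfloor}{3n^2-3n+1}+\binom{n^3-\lfloor\frac{(n-1)^3+2}{2}\rfloor}{3n^2-3n+1}< n^{3n^2}.$$ *)

(* Defs.v *)
From mathcomp Require Import all_boot.

(* Main.v *)
Require Import Defs.
From mathcomp Require Import all_boot zify.


Lemma ffact_le_exp n j : n ^_ j <= n ^ j.
Proof.
elim: j n => [|j IH] n; first by rewrite ffactn0 expn0.
rewrite ffactnS expnS leq_mul2l; apply/orP; right.
apply: leq_trans (IH _) _.
case: j {IH} => [|j]; first by rewrite !expn0.
by rewrite leq_exp2r // leq_pred.
Qed.

Lemma two_fact j : 2 ^ j <= 2 * j`!.
Proof.
elim: j => [|j IH] //; rewrite expnS factS.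
case: j IH => [|j] IH //.
rewrite mulnCA leq_mul //.
Qed.

Lemma bin2j k j : 'C(k, j) * 2 ^ j <= 2 * k ^ j.
Proof.
apply: leq_trans (_ : 'C(k, j) * (2 * j`!) <= _); first by rewrite leq_mul2l two_fact orbT.
by rewrite mulnCA bin_ffact leq_mul2l ffact_le_exp orbT.
Qed.

Lemma geom2 k : (\sum_(i < k.+1) 2 ^ (k - i)).+1 = 2 ^ k.+1.
Proof.
elim: k => [|k IH]; first by rewrite big_ord_recl big_ord0.
rewrite big_ord_recr /= subnn expn0.
rewrite (eq_bigr (fun i : 'I_k.+1 => 2 * 2 ^ (k - i))); last first.
  by move=> i _; rewrite /= subSn ?expnS // -ltnS.
rewrite -big_distrr /= addn1 expnS -IH.
by rewrite mulnS addnC addn2.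
Qed.

Lemma succ_pow k : (k.+1) ^ k <= 4 * k ^ k.
Proof.
have H : 2 ^ k * (k.+1) ^ k <= 2 ^ k * (4 * k ^ k).
  have -> : k.+1 ^ k = \sum_(i < k.+1) 'C(k, i) * (k ^ (k - i) * 1 ^ i) by rewrite -expnDn addn1.
  rewrite big_distrr /=.
  apply: leq_trans (_ : \sum_(i < k.+1) 2 * k ^ k * 2 ^ (k - i) <= _).
    apply: leq_sum => i _.
    have hi : i <= k by rewrite -ltnS.
    rewrite exp1n muln1.
    have -> : 2 ^ k = 2 ^ i * 2 ^ (k - i) by rewrite -expnD subnKC.
    have -> : k ^ k = k ^ i * k ^ (k - i) by rewrite -expnD subnKC.
    have := bin2j k i.
    move: ('C(k, i)) (2 ^ i) (2 ^ (k - i)) (k ^ i) (k ^ (k - i)) => a b c d e h.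
    have : a * b * (c * e) <= 2 * d * (c * e) by rewrite leq_mul2r h orbT.
    by rewrite -!mulnA; lia.
  rewrite -big_distrr /=.
  have := geom2 k; rewrite expnS.
  move: (\sum_(i < k.+1) 2 ^ (k - i)) (2 ^ k) (k ^ k) => S P K hS.
  have hS' : S <= 2 * P by lia.
  apply: leq_trans (leq_mul (leqnn (2 * K)) hS') _.
  by rewrite (_ : 2 * K * (2 * P) = P * (4 * K)) //; nia.
by rewrite leq_pmul2l ?expn_gt0 in H.
Qed.

Lemma pow_fact k : k ^ k <= 4 ^ k * k`!.
Proof.
elim: k => [|k IH] //.
rewrite expnS factS.
apply: leq_trans (_ : k.+1 * (4 * k ^ k) <= _); first by rewrite leq_mul2l succ_pow orbT.
have : 4 * k ^ k <= 4 * (4 ^ k * k`!) by rewrite leq_mul2l IH orbT.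
rewrite expnS; move: (k ^ k) (4 ^ k) (k`!) => a b c h.
have : k.+1 * (4 * a) <= k.+1 * (4 * (b * c)) by rewrite leq_mul2l h orbT.
lia.
Qed.

Lemma bin_kk m k : 'C(m, k) * k ^ k <= (4 * m) ^ k.
Proof.
apply: leq_trans (_ : 'C(m, k) * (4 ^ k * k`!) <= _); first by rewrite leq_mul2l pow_fact orbT.
rewrite mulnCA bin_ffact expnMn leq_mul2l ffact_le_exp orbT //.
Qed.

Lemma bin_le_pow m k n : 0 < k -> 4 * m <= n * k -> 'C(m, k) <= n ^ k.
Proof.
move=> k0 h.
have : 'C(m, k) * k ^ k <= n ^ k * k ^ k.
  apply: leq_trans (bin_kk m k) _; rewrite -expnMn leq_exp2r //.
by rewrite leq_mul2r expn_eq0 eqn0Ngt k0.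
Qed.

Lemma bin_le_2exp m k : 'C(m, k) <= 2 ^ m.
Proof.
case: (leqP k m) => hk; last by rewrite bin_small.
have := expnDn 1 1 m; rewrite addn1 => ->.
rewrite (bigD1 (Ordinal (n:=m.+1) (m:=k) hk)) //= !exp1n !muln1 leq_addr //.
Qed.

Theorem proposition4 (n : nat) (hn : 2 <= n) :
  'C(n ^ 3 - ((n - 1) ^ 3 + 1) %/ 2, 3 * n ^ 2 - 3 * n + 1)
  + 'C(n ^ 3 - ((n - 1) ^ 3 + 2) %/ 2, 3 * n ^ 2 - 3 * n + 1)
  < n ^ (3 * n ^ 2).
Proof.
have e3 : n ^ 3 = n * n * n by rewrite !expnS expn0 muln1 mulnA.
have e2 : n ^ 2 = n * n by rewrite !expnS expn0 muln1.
have f3 : (n - 1) ^ 3 = (n - 1) * (n - 1) * (n - 1) by rewrite !expnS expn0 muln1 mulnA.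
set q1 := ((n - 1) ^ 3 + 1) %/ 2.
set q2 := ((n - 1) ^ 3 + 2) %/ 2.
have h1 : (n - 1) ^ 3 <= 2 * q1.
  have := divn_eq ((n - 1) ^ 3 + 1) 2; have := ltn_pmod ((n - 1) ^ 3 + 1) (isT : 0 < 2).
  rewrite -/q1; lia.
have h12 : q1 <= q2 by apply: leq_div2r; lia.
set k := 3 * n ^ 2 - 3 * n + 1.
set m1 := n ^ 3 - q1.
set m2 := n ^ 3 - q2.
have hm : m2 <= m1 by rewrite /m1 /m2; lia.
have hm1 : 2 * m1 <= n * n * n + 3 * (n * n) - 3 * n + 1.
  rewrite /m1 e3; rewrite f3 in h1; nia.
have ek : k = 3 * (n * n) - 3 * n + 1 by rewrite /k e2.
have hk0 : 0 < k by lia.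
have hC : 'C(m2, k) <= 'C(m1, k) by apply: leq_bin2l.
case: (leqP 9 n) => hn9.
  have hb : 'C(m1, k) <= n ^ k.
    apply: bin_le_pow => //.
    rewrite ek; nia.
  have ekk : 3 * n ^ 2 = k + (3 * n - 1) by rewrite ek e2; nia.
  rewrite ekk expnD.
  have hp : 2 < n ^ (3 * n - 1).
    apply: leq_trans (_ : n ^ 1 <= _); first by rewrite expn1; lia.
    by rewrite leq_pexp2l //; lia.
  have hnk : 0 < n ^ k by rewrite expn_gt0; lia.
  apply: leq_trans (_ : (n ^ k) * 3 <= _); first by lia.
  by rewrite leq_mul2l hp orbT.
have hb1 := bin_le_2exp m1 k.
have hsum : 'C(m1, k) + 'C(m2, k) <= 2 ^ m1.+1 by rewrite expnS; lia.
apply: leq_trans (_ : 2 ^ m1.+1 < _) => //.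
case: (leqP 4 n) => hn4.
  apply: leq_trans (_ : 2 ^ (2 * (3 * n ^ 2)) <= _).
    rewrite ltn_exp2l // e2; nia.
  by rewrite expnM leq_exp2r //; try lia; rewrite e2; nia.
apply: leq_trans (_ : 2 ^ (3 * n ^ 2) <= _).
  rewrite ltn_exp2l // e2; nia.
by rewrite leq_exp2r //; rewrite e2; nia.
Qed.
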